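(* Let $p$ be a prime and let $\lambda\vdash n$, $\mu\vdash m$ ($n,m\ge0$) be $p$-deprived partitions having no part in common. Then $g_{\lambda\mu}=g_\lambda g_\mu$ in $\Lambda_{\mathbb{Q}}$. Consequently, for every $p$-deprived partition $\lambda$, $g_\lambda=\prod_{u\ge1,\,p\nmid u}g_{(u)^{r_u(\lambda)}}$.
   Context: $\Lambda_{\mathbb{Q}}$ is the ring of symmetric functions in $x_1,x_2,\dots$ over $\mathbb{Q}$; $p_s=\sum_ix_i^s$. For a partition $\lambda$ (written $\lambda\vdash n$ if its parts sum to $n$), $r_a(\lambda)$ is the number of parts equal to $a$, $p_\lambda=\prod p_{\lambda_i}$ over nonzero parts, $z_\lambda=\prod_{a\ge1}a^{r_a(\lambda)}r_a(\lambda)!$, and $(-1)^\lambda=(-1)^{\sum_i(\lambda_i-1)}$. The product $\lambda\mu$ of partitions is the partition whose multiset of parts is the union of those of $\lambda$ and $\mu$; $(u)^r$ is the partition with $r$ parts equal to $u$. A partition $\mu$ is a $p$-splitting of $\lambda$ if $\mu$ is obtained from $\lambda$ by replacing one part $pu$ ($u\ge1$) by $p$ parts equal to $u$; $p$-equivalence $\sim_p$ is the equivalence relation on partitions of $n$ generated by $p$-splitting. A partition is $p$-deprived if none of its parts is divisible by $p$. Define $g_\lambda:=\sum_{\mu\sim_p\lambda}(-1)^\mu\frac{p_\mu}{z_\mu}$. *)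

(* Defs.v *)
From HB Require Import structures.
From mathcomp Require Import all_boot all_order all_algebra.
From mathcomp Require Import mpoly.
From Stdlib Require Import ClassicalEpsilon Relation_Operators.
Set Implicit Arguments. Unset Strict Implicit. Unset Printing Implicit Defensive.
Import Order.TTheory GRing.Theory Num.Theory.

Definition pbool (P : Prop) : bool :=
  if excluded_middle_informative P then true else false.

Definition is_partition (l : seq nat) : bool := sorted geq l && all (leq 1) l.
Definition is_partition_of (n : nat) (l : seq nat) : bool :=
  is_partition l && (sumn l == n).

Definition part_candidates (n : nat) : seq (seq nat) :=
  flatten [seq [seq map (@nat_of_ord n.+1) (tval t) | t : k.-tuple 'I_n.+1]
          | k <- iota 0 n.+1].

Definition partitions (n : nat) : seq (seq nat) :=
  undup (filter (is_partition_of n) (part_candidates n)).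

Definition mult (a : nat) (l : seq nat) : nat := count_mem a l.

(* product of partitions: union of multisets of parts *)
Definition pprod (l m : seq nat) : seq nat := sort geq (l ++ m).

Definition psplit (p : nat) (lam mu : seq nat) : Prop :=
  is_partition lam /\ is_partition mu /\
  exists u, 1 <= u /\ (p * u \in lam) /\ perm_eq mu (nseq p u ++ rem (p * u) lam).

Definition pequiv (p : nat) (lam mu : seq nat) : Prop :=
  clos_refl_sym_trans (seq nat) (psplit p) lam mu.

Definition p_deprived (p : nat) (l : seq nat) : bool := all (fun a => ~~ (p %| a)) l.

Definition zee (l : seq nat) : nat :=
  \prod_(a <- undup l) (a ^ mult a l * (mult a l)`!).

Definition psign (l : seq nat) : rat := (-1) ^+ (sumn l - size l).

Local Open Scope ring_scope.

Definition psum (N s : nat) : {mpoly rat[N]} := \sum_(i < N) 'X_i ^+ s.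

Definition pmon (N : nat) (l : seq nat) : {mpoly rat[N]} := \prod_(a <- l) psum N a.

Definition gfun (N p : nat) (lam : seq nat) : {mpoly rat[N]} :=
  \sum_(mu <- partitions (sumn lam) | pbool (pequiv p lam mu))
     ((psign mu / (zee mu)%:R) *: pmon N mu).

(* Main.v *)
Require Import Defs.
From HB Require Import structures.
From mathcomp Require Import all_boot all_order all_algebra.
From mathcomp Require Import mpoly.
From Stdlib Require Import ClassicalEpsilon Relation_Operators.
From mathcomp Require Import zify.
Set Implicit Arguments. Unset Strict Implicit. Unset Printing Implicit Defensive.
Import GRing.Theory.

Lemma geq_total : total geq. Proof. by move=> a b; apply: leq_total. Qed.
Lemma geq_trans : transitive geq. Proof. by move=> a b c /= h1 h2; apply: leq_trans h2 h1. Qed.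
Lemma geq_anti : antisymmetric geq.
Proof. by move=> a b /andP [/= h1 h2]; apply/eqP; rewrite eqn_leq h1 h2. Qed.

Lemma sort_perm_sorted (s t : seq nat) : sorted geq t -> perm_eq s t -> sort geq s = t.
Proof.
move=> st pst; rewrite -(sorted_sort geq_trans st).
by apply/(perm_sortP geq_total geq_trans geq_anti).
Qed.

Lemma sorted_nseq_geq n x : sorted geq (nseq n x).
Proof. by elim: n => [|[|n] IH] //=; rewrite leqnn. Qed.

Lemma sumn_ge_size l : all (leq 1) l -> size l <= sumn l.
Proof. elim: l => [|a l IH] //= /andP [a0 al]; rewrite -add1n leq_add // IH //. Qed.

Lemma perm_sort' (s : seq nat) : perm_eq (sort geq s) s.
Proof. by rewrite perm_sort. Qed.

Lemma part_sort l : all (leq 1) l -> is_partition (sort geq l).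
Proof.
move=> h; rewrite /is_partition (sort_sorted geq_total) /=.
by rewrite (perm_all _ (perm_sort' _)).
Qed.

Lemma all_rem (a : pred nat) x l : all a l -> all a (rem x l).
Proof. by move=> /allP h; apply/allP => y /mem_rem /h. Qed.

Section Red.
Variable p : nat.
Hypothesis hp : prime p.

Definition pp a := a`_p.
Definition bs a := a`_p^'.
Definition red (l : seq nat) := flatten [seq nseq (pp a) (bs a) | a <- l].

Lemma red_cat s t : red (s ++ t) = red s ++ red t.
Proof. by rewrite /red map_cat flatten_cat. Qed.

Lemma red_cons a s : red (a :: s) = nseq (pp a) (bs a) ++ red s.
Proof. by []. Qed.

Lemma perm_red s t : perm_eq s t -> perm_eq (red s) (red t).
Proof. by move=> h; apply: perm_flatten; apply: perm_map. Qed.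

Lemma pp_gt0 a : 0 < pp a. Proof. exact: part_gt0. Qed.

Lemma pp_bs a : 0 < a -> pp a * bs a = a.
Proof. exact: partnC. Qed.

Lemma ppM u : 0 < u -> pp (p * u) = p * pp u.
Proof.
move=> u0; rewrite /pp (partnM _ (prime_gt0 hp) u0).
by rewrite part_pnat_id // pnat_id.
Qed.

Lemma bsM u : 0 < u -> bs (p * u) = bs u.
Proof.
move=> u0; rewrite /bs (partnM _ (prime_gt0 hp) u0).
rewrite part_p'nat ?mul1n //.
by rewrite pnatNK pnat_id.
Qed.

Lemma red_nseq n u : red (nseq n u) = nseq (n * pp u) (bs u).
Proof. by elim: n => [|n IH] //=; rewrite red_cons IH mulSn nseqD. Qed.

Lemma red_pdeprived l : p_deprived p l -> red l = l.
Proof.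
elim: l => [|a l IH] //= /andP [pa pl].
have h : (p^').-nat a by rewrite p'natE.
by rewrite red_cons IH // /pp /bs (part_p'nat h) (part_pnat_id h).
Qed.
Lemma sumn_red l : all (leq 1) l -> sumn (red l) = sumn l.
Proof.
elim: l => [|a l IH] //= /andP [a0 al].
by rewrite red_cons sumn_cat IH // sumn_nseq mulnC pp_bs.
Qed.

Lemma psplit_red x y : psplit p x y -> perm_eq (red x) (red y).
Proof.
case=> _ [_ [u [u0 [ux py]]]].
have h1 := perm_red py; rewrite red_cat red_nseq in h1.
have h2 := perm_red (perm_to_rem ux); rewrite red_cons ppM // bsM // in h2.
by apply: (perm_trans h2); rewrite perm_sym.
Qed.

Lemma pequiv_red x y : pequiv p x y -> perm_eq (red x) (red y).
Proof.
elim=> {x y} [x y /psplit_red //| x | x y _ h | x y z _ h1 _ h2].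
- exact: perm_refl.
- by rewrite perm_sym.
- exact: perm_trans h1 h2.
Qed.

Lemma pequiv_sort_red x : is_partition x -> pequiv p x (sort geq (red x)).
Proof.
have [n] := ubnP (sumn x - size x); elim: n x => // n IH x; rewrite ltnS => hk px.
have px' := px; case/andP: px' => sx ax.
case: (boolP (has (fun a => p %| a) x)) => [/hasP [a xa pa] | hn].
- have a0 : 0 < a by move/allP: ax => /(_ a xa).
  have p1 : 1 < p by apply: prime_gt1.
  set u := a %/ p.
  have au : a = p * u by rewrite mulnC divnK.
  have u0 : 0 < u by rewrite divn_gt0 ?prime_gt0 // dvdn_leq.
  set y := sort geq (nseq p u ++ rem a x).
  have ay1 : all (leq 1) (nseq p u ++ rem a x) by rewrite all_cat all_nseq u0 orbT all_rem.
  have py : is_partition y by apply: part_sort.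
  have spl : psplit p x y.
    split=> //; split=> //; exists u; split=> //; split; first by rewrite -au.
    by rewrite -au /y perm_sort perm_refl.
  have hx := perm_to_rem xa.
  have e1 := perm_sumn hx; have e2 := perm_size hx.
  have e3 : sumn y = sumn x by rewrite /y (perm_sumn (perm_sort' _)) sumn_cat sumn_nseq e1 /= au mulnC.
  have e4 : size y = p + size (rem a x) by rewrite /y (perm_size (perm_sort' _)) size_cat size_nseq.
  have e5 := sumn_ge_size (all_rem a ax).
  have hy := IH y ltac:(move: e1 e2 e3 e4 e5 hk; rewrite /= => -> -> -> -> ; lia) py.
  have -> : sort geq (red x) = sort geq (red y).
    by apply/(perm_sortP geq_total geq_trans geq_anti); apply: psplit_red.
  apply: rst_trans hy; exact: rst_step.
- have dx : p_deprived p x by rewrite /p_deprived all_predC.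
  rewrite red_pdeprived // sorted_sort //; first exact: rst_refl.
  exact: geq_trans.
Qed.

Lemma pequiv_iff lam y : is_partition lam -> p_deprived p lam -> is_partition y ->
  pequiv p lam y <-> perm_eq (red y) lam.
Proof.
move=> pl dl py; split.
- by move/pequiv_red; rewrite red_pdeprived // perm_sym.
- move=> h; apply: rst_sym.
  have := pequiv_sort_red py.
  by rewrite (sort_perm_sorted _ h) //; case/andP: pl.
Qed.
End Red.

Lemma mem_part_cand n l : is_partition_of n l -> l \in part_candidates n.
Proof.
case/andP=> /andP [_ al] /eqP sl.
have hs : size l < n.+1 by rewrite ltnS -sl sumn_ge_size.
have hle : all (fun a => a < n.+1) l.
  apply/allP => a al'; rewrite ltnS -sl.
  elim: (l) al' => //= b t IHt; rewrite inE => /orP [/eqP -> | /IHt]; first exact: leq_addr.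
  by move=> h; apply: leq_trans h (leq_addl _ _).
apply/flattenP; exists [seq map (@nat_of_ord n.+1) (tval t) | t : (size l).-tuple 'I_n.+1].
  by apply/mapP; exists (size l) => //; rewrite mem_iota.
apply/mapP; exists (map_tuple (@inord n) (in_tuple l)); first by rewrite mem_enum.
rewrite /= -map_comp; apply/esym; rewrite -[RHS]map_id; apply/eq_in_map => a al' /=.
by rewrite inordK //; move/allP: hle => /(_ a al').
Qed.

Lemma mem_partitions n l : (l \in partitions n) = is_partition_of n l.
Proof.
rewrite /partitions mem_undup mem_filter.
by case h: (is_partition_of n l) => //=; apply: mem_part_cand.
Qed.


Lemma pboolP (P : Prop) : reflect P (pbool P).
Proof. by rewrite /pbool; case: excluded_middle_informative => h; constructor. Qed.

Section Red2.
Variable p : nat.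
Hypothesis hp : prime p.

Definition S (l : seq nat) := [seq y <- partitions (sumn l) | pbool (pequiv p l y)].

Lemma uniq_S l : uniq (S l).
Proof. by rewrite filter_uniq // undup_uniq. Qed.

Lemma memS l y : is_partition l -> p_deprived p l ->
  (y \in S l) = is_partition y && perm_eq (red p y) l.
Proof.
move=> pl dl; rewrite mem_filter mem_partitions /is_partition_of.
case py: (is_partition y) => /=; last by rewrite andbF.
apply/idP/idP.
- by case/andP=> /pboolP /(pequiv_iff hp pl dl py).
- move=> h; apply/andP; split; first by apply/pboolP; apply/(pequiv_iff hp pl dl py).
  rewrite -(sumn_red p) ?(perm_sumn h) //; by case/andP: py.
Qed.

Lemma bs_mem_red a y : a \in y -> bs p a \in red p y.
Proof.
elim: y => //= b y IH; rewrite inE red_cons mem_cat => /orP [/eqP -> | /IH ->]; last by rewrite orbT.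
by rewrite mem_nseq pp_gt0 eqxx.
Qed.

Lemma red_filter (q : pred nat) y : red p [seq a <- y | q (bs p a)] = [seq b <- red p y | q b].
Proof.
elim: y => //= a y IH; rewrite red_cons filter_cat filter_nseq -IH.
by case: (q (bs p a)); rewrite ?mul1n ?mul0n.
Qed.
End Red2.

Section Red3.
Variable p : nat.
Hypothesis hp : prime p.
Variables L M : seq nat.
Hypotheses (pL : is_partition L) (pM : is_partition M) (dL : p_deprived p L) (dM : p_deprived p M).
Hypothesis hd : forall a, a \in L -> a \notin M.

Lemma S_bs_mem l y a : is_partition l -> p_deprived p l -> y \in S p l -> a \in y -> bs p a \in l.
Proof.
move=> pl dl; rewrite memS // => /andP [_ h] ay.
by rewrite -(perm_mem h) bs_mem_red.
Qed.

Lemma S_disj y1 y2 a : y1 \in S p L -> y2 \in S p M -> a \in y1 -> a \notin y2.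
Proof.
move=> h1 h2 a1; apply/negP => a2.
by move: (hd (S_bs_mem pL dL h1 a1)); rewrite (S_bs_mem pM dM h2 a2).
Qed.

Lemma S_split y1 y2 : y1 \in S p L -> y2 \in S p M ->
  [seq a <- pprod y1 y2 | bs p a \in L] = y1 /\ [seq a <- pprod y1 y2 | bs p a \notin L] = y2.
Proof.
move=> h1 h2.
have py1 : is_partition y1 by move: h1; rewrite memS // => /andP [].
have py2 : is_partition y2 by move: h2; rewrite memS // => /andP [].
rewrite /pprod !(filter_sort geq_total geq_trans) !filter_cat.
have e1 : [seq a <- y1 | bs p a \in L] = y1.
  by apply/all_filterP/allP => a a1; apply: S_bs_mem h1 a1.
have e2 : [seq a <- y2 | bs p a \in L] = [::].
  rewrite -(filter_pred0 y2); apply: eq_in_filter => a a2 /=.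
  by apply/negbTE/negP => /hd; rewrite (S_bs_mem pM dM h2 a2).
have e3 : [seq a <- y1 | bs p a \notin L] = [::].
  rewrite -(filter_pred0 y1); apply: eq_in_filter => a a1 /=.
  by rewrite (S_bs_mem pL dL h1 a1).
have e4 : [seq a <- y2 | bs p a \notin L] = y2.
  apply/all_filterP/allP => a a2; apply/negP => /hd.
  by rewrite (S_bs_mem pM dM h2 a2).
rewrite e1 e2 e3 e4 cats0 /=.
by split; apply: sorted_sort; [exact: geq_trans | case/andP: py1 | exact: geq_trans | case/andP: py2].
Qed.

Lemma pLM : is_partition (pprod L M).
Proof. apply: part_sort; rewrite all_cat; case/andP: pL => _ ->; by case/andP: pM => _ ->. Qed.

Lemma dLM : p_deprived p (pprod L M).
Proof. by move: dL dM; rewrite /p_deprived /pprod (perm_all _ (perm_sort' _)) all_cat => -> ->. Qed.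

Lemma S_prod_mem y : (y \in S p (pprod L M)) = (y \in [seq pprod y1 y2 | y1 <- S p L, y2 <- S p M]).
Proof.
rewrite (memS hp _ pLM dLM); apply/idP/allpairsP.
- case/andP=> py hr.
  have hr' : perm_eq (red p y) (L ++ M) by apply: perm_trans hr (perm_sort' _).
  set y1 := [seq a <- y | bs p a \in L]; set y2 := [seq a <- y | bs p a \notin L].
  have ay : all (leq 1) y by case/andP: py.
  have sy : sorted geq y by case/andP: py.
  have pf (q : pred nat) : is_partition [seq a <- y | q a].
    rewrite /is_partition (sorted_filter geq_trans) //=.
    by apply/allP => a; rewrite mem_filter => /andP [_ /(allP ay)].
  have fL : [seq b <- L | b \in L] = L by apply/all_filterP/allP.
  have fM : [seq b <- M | b \in L] = [::].
    rewrite -(filter_pred0 M); apply: eq_in_filter => a a2 /=.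
    by apply/negbTE/negP => /hd; rewrite a2.
  have fL' : [seq b <- L | b \notin L] = [::].
    by rewrite -(filter_pred0 L); apply: eq_in_filter => a a1 /=; rewrite a1.
  have fM' : [seq b <- M | b \notin L] = M.
    by apply/all_filterP/allP => a a2; apply/negP => /hd; rewrite a2.
  exists (y1, y2); split => /=.
  + rewrite (memS hp _ pL dL) pf /= /y1 (red_filter p (fun b => b \in L)).
    by have := perm_filter (fun b => b \in L) hr'; rewrite filter_cat fL fM cats0.
  + rewrite (memS hp _ pM dM) pf /= /y2 (red_filter p (fun b => b \notin L)).
    by have := perm_filter (fun b => b \notin L) hr'; rewrite filter_cat fL' fM'.
  + apply/esym/sort_perm_sorted => //; rewrite /y1 /y2.
    by rewrite (perm_filterC (fun a => bs p a \in L)).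
- case=> [[y1 y2]] /= [h1 h2 ->].
  move: h1 h2; rewrite (memS hp _ pL dL) (memS hp _ pM dM) => /andP [py1 r1] /andP [py2 r2].
  apply/andP; split.
    apply: part_sort; rewrite all_cat; case/andP: py1 => _ ->; by case/andP: py2 => _ ->.
  rewrite /pprod (perm_trans (perm_red p (perm_sort' _))) //.
  rewrite red_cat perm_sym (perm_trans (perm_sort' _)) //.
  by rewrite perm_sym; apply: perm_cat.
Qed.

End Red3.

Lemma zee_perm s t : perm_eq s t -> zee s = zee t.
Proof.
move=> h; rewrite /zee (perm_big _ (perm_undup (perm_mem h))).
by apply: eq_bigr => a _; rewrite /mult (permP h).
Qed.

Lemma zee_cat s t : (forall a, a \in s -> a \notin t) -> zee (s ++ t) = zee s * zee t.
Proof.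
move=> hd; rewrite /zee.
have pu : perm_eq (undup (s ++ t)) (undup s ++ undup t).
  apply: uniq_perm; rewrite ?undup_uniq //.
    rewrite cat_uniq !undup_uniq /= andbT; apply/hasPn => a; rewrite !mem_undup => at'.
    by apply/negP => /hd; rewrite at'.
  by move=> a; rewrite mem_undup !mem_cat !mem_undup.
rewrite (perm_big _ pu) big_cat /=; congr (_ * _); apply: eq_big_seq => a; rewrite mem_undup => ha.
  by rewrite /mult count_cat (count_memPn (hd a ha)) addn0.
have ha' : a \notin s by apply/negP => /hd; rewrite ha.
by rewrite /mult count_cat (count_memPn ha').
Qed.

Lemma subadd (a b c d : nat) : c <= a -> d <= b -> a + b - (c + d) = a - c + (b - d).
Proof. lia. Qed.

Local Open Scope ring_scope.

Definition cc N l : {mpoly rat[N]} := (psign l / (zee l)%:R) *: pmon N l.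

Lemma gfun_S N p l : gfun N p l = \sum_(y <- S p l) cc N y.
Proof. by rewrite /gfun /S big_filter. Qed.

Lemma cc_prod N s t : all (leq 1) s -> all (leq 1) t -> (forall a, a \in s -> a \notin t) ->
  cc N (pprod s t) = cc N s * cc N t.
Proof.
move=> hs ht hd; rewrite /cc /pprod.
have ps := perm_sort' (s ++ t).
rewrite (zee_perm ps) zee_cat //.
have -> : pmon N (sort geq (s ++ t)) = pmon N s * pmon N t.
  by rewrite /pmon (perm_big _ ps) big_cat.
have -> : psign (sort geq (s ++ t)) = psign s * psign t.
  rewrite /psign (perm_sumn ps) (perm_size ps) sumn_cat size_cat -exprD.
  have := sumn_ge_size hs; have := sumn_ge_size ht; move=> h1 h2; congr (_ ^+ _); exact: subadd.
rewrite -scalerAl -scalerAr scalerA; congr (_ *: _).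
rewrite natrM invfM; rewrite !mulrA; congr (_ * _); rewrite -!mulrA; congr (_ * _); exact: mulrC.
Qed.

Lemma S_part p (hp : prime p) l y : is_partition l -> p_deprived p l -> y \in S p l -> is_partition y.
Proof. by move=> pl dl; rewrite memS // => /andP []. Qed.

Lemma part1 p (hp : prime p) L M : is_partition L -> is_partition M ->
  p_deprived p L -> p_deprived p M -> (forall a, a \in L -> a \notin M) ->
  forall N, gfun N p (pprod L M) = gfun N p L * gfun N p M.
Proof.
move=> pL pM dL dM hd N.
rewrite !gfun_S.
have pe : perm_eq (S p (pprod L M)) [seq pprod y1 y2 | y1 <- S p L, y2 <- S p M].
  apply: uniq_perm; [exact: uniq_S | | exact: S_prod_mem].
  apply: allpairs_uniq; [exact: uniq_S | exact: uniq_S |].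
  move=> [a1 a2] [b1 b2] /allpairsP [[x1 x2] [/= h1 h2 [-> ->]]].
  move=> /allpairsP [[z1 z2] [/= k1 k2 [-> ->]]] /= e.
  have [f1 f2] := S_split hp pL pM dL dM hd h1 h2.
  have [g1 g2] := S_split hp pL pM dL dM hd k1 k2.
  by rewrite e in f1 f2; rewrite -f1 -f2 g1 g2.
rewrite (perm_big _ pe) big_allpairs_dep /= big_distrlr /=.
apply: eq_big_seq => y1 h1; apply: eq_big_seq => y2 h2.
apply: cc_prod.
- by case/andP: (S_part hp pL dL h1).
- by case/andP: (S_part hp pM dM h2).
- by move=> a; apply: S_disj h1 h2.
Qed.

Lemma gfun_nil N p (hp : prime p) : gfun N p [::] = 1.
Proof.
rewrite gfun_S.
have pe : perm_eq (S p [::]) [:: [::]].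
  apply: uniq_perm; [exact: uniq_S | by [] |] => y.
  rewrite (memS hp) // inE; apply/idP/idP; last by move/eqP ->.
  case/andP=> /andP [_ ay] h.
  have := sumn_red p ay; rewrite (perm_sumn h) /= => /esym e.
  have := sumn_ge_size ay; rewrite e leqn0 => /eqP/size0nil ->; by [].
rewrite (perm_big _ pe) big_seq1 /cc /psign /zee /pmon !big_nil /=.
by rewrite expr0 divr1 scale1r.
Qed.

Lemma filter_eq_nseq (x : nat) s : [seq a <- s | a == x] = nseq (count_mem x s) x.
Proof. by elim: s => //= a s ->; case: eqP => [->|]. Qed.

Lemma part2 p (hp : prime p) N M : forall lam : seq nat, is_partition lam -> p_deprived p lam ->
  all (fun a => (a <= M)%N) lam ->
  gfun N p lam = \prod_(1 <= u < M.+1 | ~~ (p %| u)%N) gfun N p (nseq (mult u lam) u).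
Proof.
elim: M => [|M IH] lam pl dl al.
  rewrite big_geq //.
  have -> : lam = [::].
    clear dl; case: lam pl al => // a l /andP [_ /= /andP [a1 _]] /andP [a0 _].
    by move: (leq_trans a1 a0).
  exact: gfun_nil.
rewrite big_mkcond big_nat_recr //= -big_mkcond.
case: (boolP (p %| M.+1)%N) => pM /=.
  rewrite mulr1; apply: IH => //; apply/allP => a al'.
  move/allP: al => /(_ a al'); rewrite leq_eqVlt => /orP [/eqP ea|//].
  by move/allP: dl => /(_ a al'); rewrite ea pM.
set lam' := [seq a <- lam | (a <= M)%N].
set r := mult M.+1 lam.
have al1 : all (leq 1) lam by case/andP: pl.
have pl' : is_partition lam'.
  rewrite /is_partition (sorted_filter geq_trans); last by case/andP: pl.
  by apply/allP => a; rewrite mem_filter => /andP [_ /(allP al1)].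
have dl' : p_deprived p lam'.
  by apply/allP => a; rewrite mem_filter => /andP [_ /(allP dl)].
have pn : is_partition (nseq r M.+1) by rewrite /is_partition sorted_nseq_geq all_nseq orbT.
have dn : p_deprived p (nseq r M.+1) by rewrite /p_deprived all_nseq pM orbT.
have E : lam = pprod lam' (nseq r M.+1).
  apply/esym/sort_perm_sorted; first by case/andP: pl.
  apply: (@perm_trans _ (lam' ++ [seq x <- lam | predC (fun a => (a <= M)%N) x])); last first.
    by rewrite perm_filterC.
  rewrite perm_cat2l.
  have -> : [seq x <- lam | predC (fun a => (a <= M)%N) x] = [seq a <- lam | a == M.+1].
    apply: eq_in_filter => a al' /=; move/allP: al => /(_ a al').
    by move=> aM; rewrite -ltnNge eqn_leq aM.
  by rewrite filter_eq_nseq.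
rewrite {1}E (part1 hp pl' pn dl' dn); last first.
  move=> a; rewrite mem_filter mem_nseq => /andP [aM _]; apply/negP => /andP [_ /eqP ea].
  by move: aM; rewrite ea ltnn.
congr (_ * _).
rewrite (IH lam' pl' dl'); last by apply/allP => a; rewrite mem_filter => /andP [].
rewrite big_nat_cond [RHS]big_nat_cond; apply: eq_bigr => u /andP [/andP [_ uM] _].
congr (gfun N p (nseq _ u)); rewrite /mult /lam' count_filter.
apply: eq_in_count => a _ /=; case: eqP => // ->; by rewrite -ltnS uM.
Qed.

Unset Implicit Arguments.

Theorem lemma5p1 (p : nat) (hp : prime p) :
  (forall lam mu : seq nat,
     is_partition lam -> is_partition mu ->
     p_deprived p lam -> p_deprived p mu ->
     (forall a, a \in lam -> a \notin mu) ->
     forall N : nat, gfun N p (pprod lam mu) = gfun N p lam * gfun N p mu)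
  /\
  (forall lam : seq nat, is_partition lam -> p_deprived p lam ->
     forall M : nat, all (fun a => (a <= M)%N) lam ->
     forall N : nat,
       gfun N p lam =
       \prod_(1 <= u < M.+1 | ~~ (p %| u)%N) gfun N p (nseq (mult u lam) u)).
Proof.
split.
- move=> lam mu pl pm dl dm hd N; exact: part1.
- move=> lam pl dl M aM N; exact: part2.
Qed.
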